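(* Let $n \in\mathbb N$ and $F\colon\mathbb R_+^n\to \mathbb R_+$ with $F\in P_{MB}^n$. Then $F$ is quasi-subadditive, i.e. there exists $s\geqslant1$ with $F(\mathbf a+\mathbf b)\leqslant s(F(\mathbf a)+F(\mathbf b))$ for all $\mathbf a,\mathbf b\in\mathbb R_+^n$.
   Context: $\mathbb R_+=[0,\infty)$; $\mathbf a+\mathbf b$ is the coordinatewise sum. A b-metric on $X$ is $d\colon X^2\to\mathbb R_+$ with $d(x,y)=0\iff x=y$, $d(x,y)=d(y,x)$, and for some $K\geqslant1$, $d(x,z)\leqslant K(d(x,y)+d(y,z))$ for all $x,y,z$; a metric is a b-metric with $K=1$. $P^n_{MB}$ is the set of $F\colon\mathbb R_+^n\to\mathbb R_+$ such that for every collection of metric spaces $(X_i,d_i)$, $i=1,\dots,n$, the function $D(\mathbf x,\mathbf y)=F(d_1(x_1,y_1),\dots,d_n(x_n,y_n))$ on $\prod_{i=1}^nX_i$ is a b-metric. *)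

(* Defs.v *)
From Stdlib Require Import Reals.
From mathcomp Require Import all_boot.
Open Scope R_scope.

Definition is_metric (X : Type) (d : X -> X -> R) : Prop :=
  (forall x y, 0 <= d x y) /\
  (forall x y, d x y = 0 <-> x = y) /\
  (forall x y, d x y = d y x) /\
  (forall x y z, d x z <= d x y + d y z).

Definition is_bmetric (X : Type) (d : X -> X -> R) : Prop :=
  (forall x y, 0 <= d x y) /\
  (forall x y, d x y = 0 <-> x = y) /\
  (forall x y, d x y = d y x) /\
  (exists K, 1 <= K /\ forall x y z, d x z <= K * (d x y + d y z)).

Definition nonneg_vec (n : nat) (a : 'I_n -> R) : Prop := forall i, 0 <= a i.

Definition vadd (n : nat) (a b : 'I_n -> R) : 'I_n -> R := fun i => a i + b i.

Definition P_MB (n : nat) (F : ('I_n -> R) -> R) : Prop :=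
  forall (X : 'I_n -> Type) (d : forall i, X i -> X i -> R),
    (forall i, @is_metric (X i) (d i)) ->
    @is_bmetric (forall i, X i) (fun (x y : forall i, X i) => F (fun i => d i (x i) (y i))).

(* Main.v *)
Require Import Defs.
From Stdlib Require Import Reals Lra FunctionalExtensionality.
From mathcomp Require Import all_boot.
Open Scope R_scope.

Lemma abs_metric : is_metric R (fun x y => Rabs (x - y)).
Proof.
  split; [|split; [|split]].
  - intros; apply Rabs_pos.
  - intros x y; split; intro H.
    + destruct (Rcase_abs (x - y)) as [h|h].
      * pose proof (Rabs_left _ h); lra.
      * pose proof (Rabs_right _ h); lra.
    + subst; replace (y - y) with 0 by ring; apply Rabs_R0.
  - intros; apply Rabs_minus_sym.
  - intros x y z; replace (x - z) with ((x - y) + (y - z)) by ring;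
    apply Rabs_triang.
Qed.

Theorem lemma3p4 (n : nat) (F : ('I_n -> R) -> R)
  (HF : forall a, @nonneg_vec n a -> 0 <= F a)
  (HP : @P_MB n F) :
  exists s, 1 <= s /\
    forall a b, @nonneg_vec n a -> @nonneg_vec n b ->
      F (@vadd n a b) <= s * (F a + F b).
Proof.
  destruct (HP (fun _ => R) (fun _ x y => Rabs (x - y)) (fun _ => abs_metric))
    as [_ [_ [_ [K [HK Htri]]]]].
  exists K; split; [exact HK|].
  intros a b Ha Hb.
  specialize (Htri (fun _ => 0) a (@vadd n a b)); simpl in Htri.
  assert (E1 : (fun i => Rabs (0 - @vadd n a b i)) = @vadd n a b).
  { apply functional_extensionality; intro i; unfold vadd.
    specialize (Ha i); specialize (Hb i).
    rewrite Rabs_left1; [ring|lra]. }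
  assert (E2 : (fun i => Rabs (0 - a i)) = a).
  { apply functional_extensionality; intro i.
    specialize (Ha i). rewrite Rabs_left1; [ring|lra]. }
  assert (E3 : (fun i => Rabs (a i - @vadd n a b i)) = b).
  { apply functional_extensionality; intro i; unfold vadd.
    specialize (Hb i). rewrite Rabs_left1; [ring|lra]. }
  rewrite E1 E2 E3 in Htri. exact Htri.
Qed.
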